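(* Let $f:\mathcal C_n\to\mathbb R$, let $\xi$ be a product probability measure on $\mathcal C_n$, and let $Y\sim\xi$. Then $$\mathbb E|f(Y)-f(\mathbb EY)|\le\sqrt n\,\mathrm{Lip}(f),$$ where $f(\mathbb EY)$ uses the harmonic extension of $f$ to $[-1,1]^n$.
   Context: Notation. $\mathcal C_n=\{-1,1\}^n$. Definitions. $\partial_if(y)=\tfrac12\big(f(y^{i\to1})-f(y^{i\to-1})\big)$, where $y^{i\to\pm1}$ is $y$ with its $i$-th coordinate set to $\pm1$, and $\mathrm{Lip}(f)=\max_{i,y}|\partial_if(y)|$. The harmonic extension of $f$ to $[-1,1]^n$ is its unique multilinear polynomial $\sum_S\hat f(S)\prod_{i\in S}x_i$. *)

(* Defs.v *)
From HB Require Import structures.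
From mathcomp Require Import all_boot all_order all_algebra.
Set Implicit Arguments. Unset Strict Implicit. Unset Printing Implicit Defensive.
Import Order.TTheory GRing.Theory Num.Theory.
Local Open Scope ring_scope.

(* A point y of C_n = {-1,1}^n is encoded as a boolean vector;
   its i-th coordinate is +1 if y i = true and -1 otherwise. *)
Definition cube (n : nat) := {ffun 'I_n -> bool}.

Definition coord {R : numDomainType} {n : nat} (y : cube n) (i : 'I_n) : R :=
  if y i then 1 else -1.

Definition setc {n : nat} (y : cube n) (i : 'I_n) (b : bool) : cube n :=
  [ffun j => if j == i then b else y j].

Definition dpart {R : numFieldType} {n : nat} (f : cube n -> R) (i : 'I_n) (y : cube n) : R :=
  (f (setc y i true) - f (setc y i false)) / 2%:R.

Definition Lip {R : realFieldType} {n : nat} (f : cube n -> R) : R :=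
  \big[Num.max/0]_(i : 'I_n) \big[Num.max/0]_(y : cube n) `|dpart f i y|.

Definition fourier {R : numFieldType} {n : nat} (f : cube n -> R) (S : {set 'I_n}) : R :=
  (2%:R ^+ n)^-1 * \sum_(y : cube n) f y * \prod_(i in S) coord y i.

Definition harm {R : numFieldType} {n : nat} (f : cube n -> R) (x : 'I_n -> R) : R :=
  \sum_(S : {set 'I_n}) fourier f S * \prod_(i in S) x i.

Definition prodmeas {R : numDomainType} {n : nat} (p : 'I_n -> R) (y : cube n) : R :=
  \prod_(i : 'I_n) (if y i then p i else 1 - p i).

Definition expect {R : numDomainType} {n : nat} (p : 'I_n -> R) (g : cube n -> R) : R :=
  \sum_(y : cube n) prodmeas p y * g y.

Definition meanY {R : numDomainType} {n : nat} (p : 'I_n -> R) : 'I_n -> R :=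
  fun i => expect p (fun y => coord y i).

(* Main.v *)
Require Import Defs.
From HB Require Import structures.
From mathcomp Require Import all_boot all_order all_algebra.
From mathcomp Require Import ring lra.
Set Implicit Arguments. Unset Strict Implicit. Unset Printing Implicit Defensive.
Import Order.TTheory GRing.Theory Num.Theory.
Local Open Scope ring_scope.

Definition ext n (b : bool) (y : cube n) : cube n.+1 :=
  [ffun i : 'I_n.+1 => if unlift ord0 i is Some j then y j else b].
Definition tl n (y : cube n.+1) : cube n := [ffun j => y (lift ord0 j)].

Lemma ext0 n b (y : cube n) : ext b y ord0 = b.
Proof. by rewrite ffunE unlift_none. Qed.
Lemma extS n b (y : cube n) j : ext b y (lift ord0 j) = y j.
Proof. by rewrite ffunE liftK. Qed.

Lemma ext_tl n (y : cube n.+1) : ext (y ord0) (tl y) = y.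
Proof. apply/ffunP => i; rewrite ffunE; case: unliftP => [j ->|->] //; by rewrite ffunE. Qed.

Lemma sum_split (R : nmodType) n (F : cube n.+1 -> R) :
  \sum_(y : cube n.+1) F y = \sum_(b : bool) \sum_(y : cube n) F (ext b y).
Proof.
rewrite pair_big /=.
rewrite (reindex (fun z : bool * cube n => ext z.1 z.2)) //=.
exists (fun y : cube n.+1 => (y ord0, tl y)) => [[b y] _ | y _] /=; last exact: ext_tl.
congr pair; first exact: ext0.
by apply/ffunP => j; rewrite ffunE extS.
Qed.

Lemma setc_ext0 n b c (y : cube n) : setc (ext b y) ord0 c = ext c y.
Proof.
apply/ffunP => i; rewrite !ffunE; case: unliftP => [j ->|->]; last by rewrite eqxx.
by rewrite eq_sym (negbTE (neq_lift _ _)).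
Qed.

Lemma setc_extS n b c (y : cube n) j : setc (ext b y) (lift ord0 j) c = ext b (setc y j c).
Proof.
apply/ffunP => i; rewrite !ffunE; case: unliftP => [k ->|->].
  by rewrite (inj_eq lift_inj) ffunE.
by rewrite (negbTE (neq_lift _ _)).
Qed.

Lemma prodmeas_ext (R : numDomainType) n (p : 'I_n.+1 -> R) b (y : cube n) :
  prodmeas p (ext b y) = (if b then p ord0 else 1 - p ord0) * prodmeas (fun j => p (lift ord0 j)) y.
Proof. by rewrite /prodmeas big_ord_recl ext0; congr (_ * _); apply: eq_bigr => j _; rewrite extS. Qed.

Lemma sum_prod_fact (R : comNzRingType) n (g : 'I_n -> bool -> R) :
  \sum_(y : cube n) \prod_i g i (y i) = \prod_i (g i true + g i false).
Proof. by rewrite -bigA_distr_bigA; apply: eq_bigr => i _; rewrite big_bool. Qed.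

Lemma sum_prodmeas (R : numDomainType) n (p : 'I_n -> R) : \sum_y prodmeas p y = 1.
Proof.
rewrite /prodmeas (sum_prod_fact (fun i (b : bool) => if b then p i else 1 - p i)).
by apply: big1 => i _; rewrite addrC subrK.
Qed.

Lemma prodmeas_ge0 (R : numDomainType) n (p : 'I_n -> R) (hp : forall i, 0 <= p i <= 1) y :
  0 <= prodmeas p y.
Proof.
apply: prodr_ge0 => i _; case: (y i); have /andP[h0 h1] := hp i => //.
by rewrite subr_ge0.
Qed.

Lemma expect_ext (R : numDomainType) n (p : 'I_n -> R) g h :
  (forall y, g y = h y) -> expect p g = expect p h.
Proof. by move=> E; apply: eq_bigr => y _; rewrite E. Qed.

Lemma expect_cst (R : numDomainType) n (p : 'I_n -> R) c : expect p (fun _ => c) = c.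
Proof. by rewrite /expect -big_distrl /= sum_prodmeas mul1r. Qed.

Lemma expectD (R : numDomainType) n (p : 'I_n -> R) g h :
  expect p (fun y => g y + h y) = expect p g + expect p h.
Proof. by rewrite /expect -big_split; apply: eq_bigr => y _; rewrite mulrDr. Qed.

Lemma expectZ (R : numDomainType) n (p : 'I_n -> R) c g :
  expect p (fun y => c * g y) = c * expect p g.
Proof. by rewrite /expect big_distrr; apply: eq_bigr => y _ /=; rewrite mulrCA. Qed.

Lemma expectN (R : numDomainType) n (p : 'I_n -> R) g :
  expect p (fun y => - g y) = - expect p g.
Proof. by rewrite -mulN1r -expectZ; apply: expect_ext => y; rewrite mulN1r. Qed.

Lemma expect_le (R : numDomainType) n (p : 'I_n -> R) (hp : forall i, 0 <= p i <= 1) g h :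
  (forall y, g y <= h y) -> expect p g <= expect p h.
Proof. by move=> H; apply: ler_sum => y _; apply: ler_wpM2l; [exact: prodmeas_ge0|]. Qed.

Lemma expect_norm (R : realDomainType) n (p : 'I_n -> R) (hp : forall i, 0 <= p i <= 1) g :
  `|expect p g| <= expect p (fun y => `|g y|).
Proof.
apply: le_trans (ler_norm_sum _ _ _) _; apply: ler_sum => y _.
by rewrite normrM ger0_norm // prodmeas_ge0.
Qed.

Lemma expect_split (R : numDomainType) n (p : 'I_n.+1 -> R) g :
  expect p g = p ord0 * expect (fun j => p (lift ord0 j)) (fun y => g (ext true y))
             + (1 - p ord0) * expect (fun j => p (lift ord0 j)) (fun y => g (ext false y)).
Proof.
rewrite /expect sum_split big_bool /= !big_distrr /=; congr (_ + _);
  by apply: eq_bigr => y _; rewrite prodmeas_ext mulrA.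
Qed.

Lemma expect_sq (R : numDomainType) n (p : 'I_n -> R) g c :
  expect p (fun y => (g y - c) ^+ 2) =
  expect p (fun y => g y ^+ 2) - 2%:R * c * expect p g + c ^+ 2.
Proof.
rewrite (@expect_ext _ _ _ _ (fun y => g y ^+ 2 + (- (2%:R * c * g y) + c ^+ 2))); last first.
  by move=> y; ring.
by rewrite expectD expectD expectN expect_cst expectZ addrA.
Qed.

Lemma dpart_extS (R : numFieldType) n (f : cube n.+1 -> R) b j y :
  dpart (fun z => f (ext b z)) j y = dpart f (lift ord0 j) (ext b y).
Proof. by rewrite /dpart !setc_extS. Qed.

Lemma dpart_ext0 (R : numFieldType) n (f : cube n.+1 -> R) b y :
  f (ext true y) - f (ext false y) = 2%:R * dpart f ord0 (ext b y).
Proof.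
rewrite /dpart !setc_ext0 mulrC -mulrA mulVf ?mulr1 //.
by rewrite pnatr_eq0.
Qed.

Lemma var_bound (R : realFieldType) n (p : 'I_n -> R) (hp : forall i, 0 <= p i <= 1)
  (f : cube n -> R) L : (forall i y, `|dpart f i y| <= L) ->
  expect p (fun y => f y ^+ 2) - (expect p f) ^+ 2 <= n%:R * L ^+ 2.
Proof.
elim: n p hp f => [|n IH] p hp f HL.
  pose y0 : cube 0 := [ffun i => false].
  have E : forall y : cube 0, y = y0 by move=> y; apply/ffunP => -[].
  rewrite (@expect_ext _ _ _ _ (fun _ => f y0 ^+ 2)); last by move=> y; rewrite (E y).
  rewrite (@expect_ext _ _ _ f (fun _ => f y0)); last by move=> y; rewrite (E y).
  by rewrite !expect_cst subrr mul0r.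
have hp' : forall j, 0 <= p (lift ord0 j) <= 1 by move=> j; exact: hp.
set p' := fun j => p (lift ord0 j).
rewrite !expect_split -/p'.
set A1 := expect p' _; set A0 := expect p' _.
set m1 := expect p' _; set m0 := expect p' _.
have IH1 : A1 - m1 ^+ 2 <= n%:R * L ^+ 2.
  by apply: (IH p' hp' (fun y => f (ext true y))) => j y; rewrite dpart_extS.
have IH0 : A0 - m0 ^+ 2 <= n%:R * L ^+ 2.
  by apply: (IH p' hp' (fun y => f (ext false y))) => j y; rewrite dpart_extS.
have L0 : 0 <= L.
  by apply: le_trans (HL ord0 [ffun => false]); exact: normr_ge0.
have Hd : `|m1 - m0| <= 2%:R * L.
  rewrite -(mulN1r m0) /m0 -expectZ /m1 -expectD.
  apply: le_trans (expect_norm hp' _) _.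
  rewrite -[X in _ <= X](expect_cst p').
  apply: expect_le => // y; rewrite mulN1r (dpart_ext0 f true) normrM ger0_norm ?ler0n //.
  by rewrite ler_pM2l ?ltr0n.
have Hd2 : (m1 - m0) ^+ 2 <= 4%:R * L ^+ 2.
  have : -(2%:R * L) <= m1 - m0 <= 2%:R * L by rewrite -ler_norml.
  move=> /andP[a b]; nra.
have /andP[p0 p1] := hp ord0.
have -> : (n.+1)%:R * L ^+ 2 = n%:R * L ^+ 2 + L ^+ 2 by rewrite -addn1 natrD mulrDl mul1r.
have Hpq : p ord0 * (1 - p ord0) * (m1 - m0) ^+ 2 <= L ^+ 2.
  have : p ord0 * (1 - p ord0) <= 1 / 4%:R.
    have -> : 1 / 4%:R = (1 / 2%:R) ^+ 2 :> R by field.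
    have : 0 <= (p ord0 - 1/2%:R) ^+2 := sqr_ge0 _.
    have -> : p ord0 * (1 - p ord0) = (1 / 2%:R) ^+ 2 - (p ord0 - 1/2%:R) ^+2.
      by field.
    lra.
  have : 0 <= p ord0 * (1 - p ord0) by apply: mulr_ge0; lra.
  have : 0 <= (m1 - m0) ^+ 2 := sqr_ge0 _.
  move: Hd2; set a := p ord0 * (1 - p ord0); set d := (m1 - m0) ^+ 2.
  move=> h1 h2 h3 h4.
  have : a * d <= (1 / 4%:R) * (4%:R * L ^+ 2) by apply: ler_pM.
  have -> : (1 / 4%:R) * (4%:R * L ^+ 2) = L ^+ 2 :> R by field.
  done.
set a := p ord0 in IH1 IH0 Hpq p0 p1 *.
have -> : a * A1 + (1 - a) * A0 - (a * m1 + (1 - a) * m0) ^+ 2 =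
  a * (A1 - m1 ^+ 2) + (1 - a) * (A0 - m0 ^+ 2) + a * (1 - a) * (m1 - m0) ^+ 2 by ring.
have H1 : a * (A1 - m1 ^+ 2) <= a * (n%:R * L ^+ 2) by apply: ler_wpM2l.
have H0 : (1 - a) * (A0 - m0 ^+ 2) <= (1 - a) * (n%:R * L ^+ 2) by apply: ler_wpM2l; lra.
lra.
Qed.

Lemma sum_subsets (R : comNzRingType) n (a : 'I_n -> R) :
  \sum_(S : {set 'I_n}) \prod_(i in S) a i = \prod_i (1 + a i).
Proof.
transitivity (\prod_i \sum_(b : bool) (if b then a i else 1)); last first.
  by apply: eq_bigr => i _; rewrite big_bool addrC.
rewrite bigA_distr_bigA.
rewrite (reindex (fun g : {ffun 'I_n -> bool} => [set i | g i])) /=.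
  by apply: eq_bigr => g _; rewrite big_mkcond; apply: eq_bigr => i _; rewrite inE.
exists (fun S : {set 'I_n} => [ffun i => i \in S]) => [g _ | S _].
  by apply/ffunP => i; rewrite ffunE inE.
by apply/setP => i; rewrite inE ffunE.
Qed.

Lemma harm_eq (R : numFieldType) n (f : cube n -> R) (x : 'I_n -> R) :
  harm f x = \sum_y f y * \prod_i ((1 + Defs.coord y i * x i) / 2%:R).
Proof.
rewrite /harm /fourier.
under eq_bigr do rewrite -mulrA big_distrl /= big_distrr /=.
rewrite exchange_big /=; apply: eq_bigr => y _.
transitivity ((2%:R ^+ n)^-1 * f y * \sum_(S : {set 'I_n}) \prod_(i in S) (Defs.coord y i * x i)).
  rewrite big_distrr /=; apply: eq_bigr => S _.
  by rewrite big_split /=; ring.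
rewrite sum_subsets -mulrA mulrCA; congr (_ * _).
rewrite big_split /= prodr_const card_ord exprVn mulrC.
done.
Qed.

Lemma sum_prod_fact' (R : comNzRingType) n (g : 'I_n -> bool -> R) :
  \sum_(y : cube n) \prod_i g i (y i) = \prod_i (g i true + g i false).
Proof. by rewrite -bigA_distr_bigA; apply: eq_bigr => i _; rewrite big_bool. Qed.

Lemma meanY_eq (R : numDomainType) n (p : 'I_n -> R) i : meanY p i = 2%:R * p i - 1.
Proof.
rewrite /meanY /expect.
rewrite (eq_bigr (fun y : cube n => \prod_j ((if y j then p j else 1 - p j) *
   (if j == i then (if y j then 1 else -1) else 1)))); last first.
  move=> y _; rewrite big_split /= /prodmeas; congr (_ * _).
  by rewrite -big_mkcond big_pred1_eq /coord.
rewrite (sum_prod_fact' (fun j (b : bool) => (if b then p j else 1 - p j) *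
   (if j == i then (if b then 1 else -1) else 1))).
rewrite (bigD1 i) //= eqxx big1 ?mulr1; first by ring.
by move=> j /negbTE ->; rewrite !mulr1 addrC subrK.
Qed.

Lemma harm_mean (R : numFieldType) n (p : 'I_n -> R) (f : cube n -> R) :
  harm f (meanY p) = expect p f.
Proof.
rewrite harm_eq /expect; apply: eq_bigr => y _; rewrite mulrC; congr (_ * _).
apply: eq_bigr => i _; rewrite meanY_eq /Defs.coord; case: (y i); by field.
Qed.

Lemma dpart_le_Lip (R : realFieldType) n (f : cube n -> R) i y : `|dpart f i y| <= Lip f.
Proof.
rewrite /Lip; apply: le_trans (le_bigmax _ _ i).
exact: (le_bigmax _ (fun y => `|dpart f i y|) y).
Qed.

Lemma Lip_ge0 (R : realFieldType) n (f : cube n -> R) : 0 <= Lip f.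
Proof. exact: bigmax_ge_id. Qed.

Theorem mainTheorem13 (R : rcfType) (n : nat) (p : 'I_n -> R)
  (hp : forall i, 0 <= p i <= 1) (f : cube n -> R) :
  expect p (fun y => `|f y - harm f (meanY p)|) <= Num.sqrt (n%:R) * Lip f.
Proof.
rewrite harm_mean.
set m := expect p f.
set e := expect p _.
have e0 : 0 <= e.
  by rewrite -(expect_cst p 0); apply: expect_le => // y; exact: normr_ge0.
have Hsq : 0 <= expect p (fun y => (`|f y - m| - e) ^+ 2).
  by rewrite -(expect_cst p 0); apply: expect_le => // y; exact: sqr_ge0.
rewrite expect_sq -/e in Hsq.
have E2 : expect p (fun y => `|f y - m| ^+ 2) = expect p (fun y => (f y - m) ^+ 2).
  by apply: expect_ext => y; rewrite real_normK // num_real.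
rewrite E2 expect_sq -/m in Hsq.
have V := var_bound hp (fun i y => dpart_le_Lip f i y).
have He2 : e ^+ 2 <= n%:R * Lip f ^+ 2 by rewrite -!mulrA -!expr2 in Hsq; rewrite -/m in V; lra.
rewrite -(ger0_norm e0) -sqrtr_sqr.
rewrite -(ger0_norm (Lip_ge0 f)) -sqrtr_sqr -sqrtrM ?ler0n //.
by rewrite ler_sqrt // mulr_ge0 ?ler0n ?sqr_ge0.
Qed.
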